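(* Let $(\mathcal R,\tau)$ be a t-minimal Hausdorff geometric structure and $\mathcal S$ a lore of $(\mathcal R,\tau)$. Let $X$ and $Y$ be $A$-definable sets with $\dim(X)=\dim(Y)$, and let $f:X\to Y$ be a finite-to-one $A$-definable function. Let $x\in X$ be generic over $A$. Then $f$ restricts to a loric homeomorphism between a neighborhood of $x$ in $X$ and a neighborhood of $f(x)$ in $Y$.
   Context: A structure $\mathcal R$ is geometric if (in all models of its theory) $\operatorname{acl}$ satisfies exchange and $\mathcal R$ eliminates $\exists^\infty$; $\dim$ denotes acl-dimension of tuples and definable sets, and $a\in X$ is generic over $A$ if $\dim(a/A)=\dim(X)$. ''Definable'' allows parameters. Given a topology $\tau$ on $R$ (extended to definable subsets of $R^n$ by product and subspace topologies), $(\mathcal R,\tau)$ is a Hausdorff geometric structure if: (1) $\tau$ is Hausdorff; (2) $\mathcal R$ is geometric and $\aleph_1$-saturated; (3) if $X\subset R^n$ is $A$-definable and $a\in\overline{\overline X-X}$ then $\dim(a/A)<\dim(X)$; (4) if $X$ is definable over a countable set $A$, $a\in X$ is generic over $A$, and $B\supseteq A$ is countable, then every neighborhood of $a$ contains a generic of $X$ over $B$; (5) if $X,Y$ and $Z\subset X\times Y$ are $A$-definable of the same dimension with both projections $Z\to X$, $Z\to Y$ finite-to-one, and $(x,y)\in Z$ is generic over $A$, then there are open neighborhoods $U\ni x$, $V\ni y$ such that $Z\cap(U\times V)$ is the graph of a homeomorphism $U\to V$. It is t-minimal if moreover there is a formula $\phi(x,\bar y)$ without parameters whose instances form a basis of $\tau$,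 and $R$ has no isolated points. A lore is a collection $\mathcal S$ of definable sets (''loric sets'') such that: (i) $R$ and the diagonal of $R^2$ are loric, and loric sets are closed under finite products, finite intersections and coordinate permutations; (ii) if $f:X\to Y$ is a definable homeomorphism with $X$ and the graph of $f$ loric, then $Y$ is loric; (iii) every definable open subset of a loric set is loric, and a definable set admitting an open cover by loric sets is loric; (iv) every nonempty $A$-definable $X$ has a relatively open $A$-definable loric subset $X'$ with $\dim(X-X')<\dim(X)$. A loric map is a continuous function with loric graph; a loric homeomorphism is a loric map which is a homeomorphism. *)

(* Defs.v *)
From mathcomp Require Import all_boot all_order all_algebra perm.
From mathcomp Require Import boolp classical_sets cardinality.
Set Implicit Arguments. Unset Strict Implicit. Unset Printing Implicit Defensive.
Local Open Scope classical_set_scope.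

Record language := Language {
  fsym : Type; farity : fsym -> nat;   (* constants = 0-ary function symbols *)
  rsym : Type; rarity : rsym -> nat }.

Inductive term (L : language) : Type :=
| tvar : nat -> term L
| tapp : forall f : fsym L, ('I_(farity f) -> term L) -> term L.

Inductive formula (L : language) : Type :=
| feq : term L -> term L -> formula L
| frel : forall r : rsym L, ('I_(rarity r) -> term L) -> formula L
| fneg : formula L -> formula L
| fand : formula L -> formula L -> formula L
| fex : nat -> formula L -> formula L.

Record lstructure (L : language) := MkStructure {
  carrier :> Type;
  finterp : forall f : fsym L, ('I_(farity f) -> carrier) -> carrier;
  rinterp : forall r : rsym L, ('I_(rarity r) -> carrier) -> Prop }.

Fixpoint teval (L : language) (M : lstructure L) (v : nat -> M) (t : term L) : M :=
  match t with
  | tvar i => v i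
  | tapp f args => @finterp L M f (fun j => teval v (args j))
  end.

Definition upd (T : Type) (v : nat -> T) (i : nat) (a : T) : nat -> T :=
  fun k => if k == i then a else v k.

Fixpoint sat (L : language) (M : lstructure L) (v : nat -> M) (phi : formula L) : Prop :=
  match phi with
  | feq t1 t2 => teval v t1 = teval v t2
  | frel r args => @rinterp L M r (fun j => teval v (args j))
  | fneg p => ~ sat v p
  | fand p q => sat v p /\ sat v q
  | fex i p => exists a : M, sat (upd v i a) p
  end.

(* X subset of M^n is A-definable: X = phi(M, b) for a formula phi whose
   variables 0..n-1 are the coordinates and n..n+k-1 the parameters b in A
   (any other free variable is universally closed). *)
Definition definable_in (L : language) (M : lstructure L) (A : set M) (n : nat)
    (X : set ('I_n -> M)) : Prop :=
  exists (phi : formula L) (k : nat) (b : 'I_k -> M),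
    (forall j, A (b j)) /\
    X = [set x | forall v : nat -> M, (forall i : 'I_n, v i = x i) ->
                   (forall j : 'I_k, v (n + j) = b j) -> sat v phi].

Definition acl_in (L : language) (M : lstructure L) (A : set M) (a : M) : Prop :=
  exists D : set ('I_1 -> M), definable_in A D /\ finite_set D /\ D (fun _ => a).

Definition acl_exchange (L : language) (M : lstructure L) : Prop :=
  forall (A : set M) (a b : M),
    acl_in (A `|` [set b]) a -> ~ acl_in A a -> acl_in (A `|` [set a]) b.

Definition elem_equiv (L : language) (M N : lstructure L) : Prop :=
  forall phi : formula L,
    (forall v : nat -> M, sat v phi) <-> (forall v : nat -> N, sat v phi).

Definition inst1 (L : language) (M : lstructure L) (phi : formula L) (k : nat)
    (b : 'I_k -> M) : set M :=
  [set a | forall v : nat -> M, v 0 = a -> (forall j : 'I_k, v j.+1 = b j) -> sat v phi].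

Definition elim_exists_infty (L : language) (M : lstructure L) : Prop :=
  forall (phi : formula L) (k : nat), exists N : nat, forall b : 'I_k -> M,
    finite_set (inst1 phi b) ->
    exists s : 'I_N -> M, inst1 phi b `<=` range s.

Definition geometric (L : language) (M : lstructure L) : Prop :=
  (forall N : lstructure L, elem_equiv M N -> acl_exchange N) /\ elim_exists_infty M.

Definition aleph1_saturated (L : language) (M : lstructure L) : Prop :=
  forall D : nat -> set ('I_1 -> M),
    (forall k, definable_in setT (D k)) ->
    (forall N, exists x, forall k, (k < N)%N -> D k x) ->
    exists x, forall k, D k x.

Definition dim_ge (L : language) (M : lstructure L) (n : nat) (a : 'I_n -> M)
    (A : set M) (k : nat) : Prop :=
  exists s : 'I_k -> 'I_n, injective s /\
    forall i : 'I_k,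
      ~ acl_in (A `|` (fun y => exists j, j != i /\ y = a (s j))) (a (s i)).

Definition dim_tuple (L : language) (M : lstructure L) (n : nat) (a : 'I_n -> M)
    (A : set M) : nat :=
  \max_(k < n.+1 | `[< dim_ge a A k >]) k.

(* dim(X) (as an int; -1 stands for the dimension of the empty set):
   max of dim(a/B) for a in X and B a countable set over which X is definable *)
Definition dim_set (L : language) (M : lstructure L) (n : nat)
    (X : set ('I_n -> M)) : int :=
  if `[< X = set0 >] then Negz 0 (* = -1 *) else
  Posz (\max_(k < n.+1 | `[< exists B : set M, countable B /\ definable_in B X /\
                                exists2 a, X a & dim_ge a B k >]) k).

Definition generic (L : language) (M : lstructure L) (A : set M) (n : nat)
    (X : set ('I_n -> M)) (a : 'I_n -> M) : Prop :=
  X a /\ Posz (dim_tuple a A) = dim_set X.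

Definition is_topology (T : Type) (tau : set (set T)) : Prop :=
  [/\ tau setT,
      (forall U V, tau U -> tau V -> tau (U `&` V)) &
      (forall F : set (set T), F `<=` tau -> tau (\bigcup_(U in F) U))].

Definition hausdorff (T : Type) (tau : set (set T)) : Prop :=
  forall x y : T, x <> y ->
    exists U V, [/\ tau U, tau V, U x, V y & U `&` V = set0].

Definition prod_open (T : Type) (tau : set (set T)) (n : nat) (U : set ('I_n -> T)) : Prop :=
  forall x, U x -> exists V : 'I_n -> set T,
    (forall i, tau (V i) /\ V i (x i)) /\ [set y | forall i, V i (y i)] `<=` U.

Definition closure (T : Type) (tau : set (set T)) (n : nat) (S : set ('I_n -> T)) :
    set ('I_n -> T) :=
  [set a | forall W, prod_open tau W -> W a -> exists y, W y /\ S y].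

Definition rel_open (T : Type) (tau : set (set T)) (n : nat) (X U : set ('I_n -> T)) : Prop :=
  U `<=` X /\ exists W, prod_open tau W /\ U = W `&` X.

Definition nbhd_in (T : Type) (tau : set (set T)) (n : nat) (X : set ('I_n -> T))
    (x : 'I_n -> T) (N : set ('I_n -> T)) : Prop :=
  N `<=` X /\ exists O, [/\ rel_open tau X O, O x & O `<=` N].

Definition continuous_on (T : Type) (tau : set (set T)) (n m : nat)
    (f : ('I_n -> T) -> ('I_m -> T)) (U : set ('I_n -> T)) : Prop :=
  forall u, U u -> forall W, prod_open tau W -> W (f u) ->
    exists O, [/\ prod_open tau O, O u & forall u', U u' -> O u' -> W (f u')].

Definition homeo_on (T : Type) (tau : set (set T)) (n m : nat)
    (f : ('I_n -> T) -> ('I_m -> T)) (U : set ('I_n -> T)) (V : set ('I_m -> T)) : Prop :=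
  [/\ (forall u, U u -> V (f u)), continuous_on tau f U &
      exists g : ('I_m -> T) -> ('I_n -> T),
        [/\ (forall v, V v -> U (g v)), (forall u, U u -> g (f u) = u),
            (forall v, V v -> f (g v) = v) & continuous_on tau g V]].

Definition join (T : Type) (n m : nat) (x : 'I_n -> T) (y : 'I_m -> T) : 'I_(n + m) -> T :=
  fun i => match split i with inl j => x j | inr j => y j end.

Definition prodset (T : Type) (n m : nat) (X : set ('I_n -> T)) (Y : set ('I_m -> T)) :
    set ('I_(n + m) -> T) :=
  [set z | exists x y, [/\ X x, Y y & z = join x y]].

Definition graph_on (T : Type) (n m : nat) (f : ('I_n -> T) -> ('I_m -> T))
    (U : set ('I_n -> T)) : set ('I_(n + m) -> T) :=
  [set z | exists u, U u /\ z = join u (f u)].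

(* (parameter sets A, B are countable, the paper's standing convention) *)

Local Open Scope ring_scope.

Definition HGS (L : language) (R : lstructure L) (tau : set (set R)) : Prop :=
  [/\ is_topology tau /\ hausdorff tau,
      geometric R /\ aleph1_saturated R,
      (forall (n : nat) (A : set R) (X : set ('I_n -> R)) (a : 'I_n -> R),
          countable A -> definable_in A X ->
          closure tau (closure tau X `\` X) a ->
          Posz (dim_tuple a A) < dim_set X),
      (forall (n : nat) (A B : set R) (X : set ('I_n -> R)) (a : 'I_n -> R),
          countable A -> definable_in A X -> generic A X a ->
          countable B -> A `<=` B ->
          forall U, prod_open tau U -> U a -> exists b, U b /\ generic B X b) &
      (* (5) *)
      (forall (n m : nat) (A : set R) (X : set ('I_n -> R)) (Y : set ('I_m -> R))
              (Z : set ('I_(n + m) -> R)) (x : 'I_n -> R) (y : 'I_m -> R),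
          countable A -> definable_in A X -> definable_in A Y -> definable_in A Z ->
          dim_set X = dim_set Y -> dim_set Y = dim_set Z ->
          Z `<=` prodset X Y ->
          (forall x', finite_set [set y' | Z (join x' y')]) ->
          (forall y', finite_set [set x' | Z (join x' y')]) ->
          generic A Z (join x y) ->
          exists U V, [/\ rel_open tau X U, U x, rel_open tau Y V, V y &
            exists g, homeo_on tau g U V /\ Z `&` prodset U V = graph_on g U])].

Arguments HGS {L} R tau.

Definition t_minimal (L : language) (R : lstructure L) (tau : set (set R)) : Prop :=
  [/\ HGS R tau,
      (exists (phi : formula L) (k : nat),
         (forall b : 'I_k -> R, tau (inst1 phi b)) /\
         (forall (U : set R) (a : R), tau U -> U a ->
            exists b : 'I_k -> R, inst1 phi b a /\ inst1 phi b `<=` U)) &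
      (forall a : R, ~ tau [set a])].

Arguments t_minimal {L} R tau.

Definition lore (L : language) (R : lstructure L) (tau : set (set R))
    (S : forall n : nat, set (set ('I_n -> R))) : Prop :=
  [/\ (forall n X, S n X -> definable_in setT X),
      [/\ S 1%N setT, S 2%N [set x | x ord0 = x ord_max],
          (forall n m X Y, S n X -> S m Y -> S (n + m)%N (prodset X Y)),
          (forall n X Y, S n X -> S n Y -> S n (X `&` Y)) &
          (forall n (s : {perm 'I_n}) X, S n X -> S n [set x | X (fun i => x (s i))])],
      (forall n m (X : set ('I_n -> R)) (Y : set ('I_m -> R)) f,
          homeo_on tau f X Y -> definable_in setT (graph_on f X) ->
          S n X -> S (n + m)%N (graph_on f X) -> S m Y),
      (forall n (X U : set ('I_n -> R)),
          S n X -> definable_in setT U -> rel_open tau X U -> S n U) /\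
      (forall n (X : set ('I_n -> R)), definable_in setT X ->
          (forall x, X x -> exists U, [/\ S n U, rel_open tau X U & U x]) -> S n X) &
      (* (iv) *)
      (forall n (A : set R) (X : set ('I_n -> R)),
          countable A -> definable_in A X -> X !=set0 ->
          exists X', [/\ rel_open tau X X', definable_in A X', S n X' &
                         dim_set (X `\` X') < dim_set X])].

Arguments lore {L} R tau S.

Definition loric_homeo (L : language) (R : lstructure L) (tau : set (set R))
    (S : forall n : nat, set (set ('I_n -> R))) (n m : nat)
    (f : ('I_n -> R) -> ('I_m -> R)) (U : set ('I_n -> R)) (V : set ('I_m -> R)) : Prop :=
  homeo_on tau f U V /\ S (n + m)%N (graph_on f U).

(* Main.v *)
Require Import Defs.
From mathcomp Require Import all_boot all_order all_algebra perm.
From mathcomp Require Import boolp classical_sets cardinality.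
From mathcomp Require Import zify.
Require Import Defs.
Set Implicit Arguments. Unset Strict Implicit. Unset Printing Implicit Defensive.
Local Open Scope classical_set_scope.

Section Expr.
Variable L : language.
Variable M : lstructure L.

Fixpoint tbound (t : term L) : nat :=
  match t with tvar i => i.+1 | @tapp _ f args => (\max_(j < farity f) tbound (args j))%N end.

Fixpoint fbound (phi : formula L) : nat :=
  match phi with
  | feq t1 t2 => maxn (tbound t1) (tbound t2)
  | @frel _ r args => (\max_(j < rarity r) tbound (args j))%N
  | fneg p => fbound p
  | fand p q => maxn (fbound p) (fbound q)
  | fex i p => fbound p
  end.

Fixpoint teval_ext (t : term L) (v v' : nat -> M) {struct t} :
  (forall i, i < tbound t -> v i = v' i) -> teval v t = teval v' t.
Proof.
case: t => [i|f args] /= H; first by apply: H.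
f_equal; apply: funext => j; apply: teval_ext => i Hi; apply: H.
exact: leq_trans Hi (@leq_bigmax _ (fun j => tbound (args j)) j).
Qed.

Lemma sat_ext (phi : formula L) (v v' : nat -> M) :
  (forall i, i < fbound phi -> v i = v' i) -> (sat v phi <-> sat v' phi).
Proof.
elim: phi v v' => [t1 t2|r args|p IH|p IHp q IHq|i p IH] v v' /= H.
- rewrite (teval_ext (v':=v') (t:=t1)) ?(teval_ext (v':=v') (t:=t2)) //.
  + by move=> k Hk; apply: H; rewrite leq_max Hk orbT.
  + by move=> k Hk; apply: H; rewrite leq_max Hk.
- have -> : (fun j => teval v (args j)) = (fun j => teval v' (args j)) => //.
  apply: funext => j; apply: teval_ext => k Hk; apply: H.
  exact: leq_trans Hk (@leq_bigmax _ (fun j => tbound (args j)) j).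
- by rewrite (IH v v').
- rewrite (IHp v v') ?(IHq v v') //.
  + by move=> k Hk; apply: H; rewrite leq_max Hk orbT.
  + by move=> k Hk; apply: H; rewrite leq_max Hk.
- split=> -[a Ha]; exists a.
  + apply/(IH (upd v i a)) => // k Hk; rewrite /upd; case: ifP => // _; exact: H.
  + apply/(IH _ (upd v' i a)) => // k Hk; rewrite /upd; case: ifP => // _; exact: H.
Qed.

Fixpoint tren (s : nat -> nat) (t : term L) : term L :=
  match t with tvar i => tvar L (s i) | @tapp _ f args => @tapp L f (fun j => tren s (args j)) end.

Fixpoint fren (s : nat -> nat) (phi : formula L) : formula L :=
  match phi with
  | feq t1 t2 => feq (tren s t1) (tren s t2)
  | @frel _ r args => @frel L r (fun j => tren s (args j))
  | fneg p => fneg (fren s p)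
  | fand p q => fand (fren s p) (fren s q)
  | fex i p => fex (s i) (fren s p)
  end.

Fixpoint teval_ren (s : nat -> nat) (t : term L) (v : nat -> M) {struct t} :
  teval v (tren s t) = teval (fun i => v (s i)) t.
Proof.
case: t => [i|f args] //=.
f_equal; apply: funext => j; exact: teval_ren.
Qed.

Lemma sat_ren (s : nat -> nat) (phi : formula L) (v : nat -> M) :
  injective s -> (sat v (fren s phi) <-> sat (fun i => v (s i)) phi).
Proof.
move=> si; elim: phi v => [t1 t2|r args|p IH|p IHp q IHq|i p IH] v /=.
- by rewrite !teval_ren.
- by have -> : (fun j => teval v (tren s (args j))) = (fun j => teval (fun i => v (s i)) (args j))
    by apply: funext => j; rewrite teval_ren.
- by rewrite IH.
- by rewrite IHp IHq.
- have E : forall a, (fun k => upd v (s i) a (s k)) = upd (fun k => v (s k)) i a.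
    by move=> a; apply: funext => k; rewrite /upd (inj_eq si).
  by split=> -[a Ha]; exists a; [rewrite -E; apply/IH | apply/IH; rewrite E].
Qed.

Definition Ex (P : (nat -> M) -> Prop) := exists phi : formula L, forall v, P v <-> sat v phi.
Definition Supp (N : nat) (P : (nat -> M) -> Prop) :=
  forall v v', (forall i, i < N -> v i = v' i) -> (P v <-> P v').

Lemma Ex_ext P Q : Ex P -> (forall v, P v <-> Q v) -> Ex Q.
Proof. by move=> [phi H] E; exists phi => v; rewrite -E. Qed.

Lemma Ex_sat phi : Ex (fun v => sat v phi).
Proof. by exists phi. Qed.

Lemma Ex_not P : Ex P -> Ex (fun v => ~ P v).
Proof. by move=> [phi H]; exists (fneg phi) => v /=; rewrite H. Qed.

Lemma Ex_and P Q : Ex P -> Ex Q -> Ex (fun v => P v /\ Q v).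
Proof. by move=> [phi H] [psi K]; exists (fand phi psi) => v /=; rewrite H K. Qed.

Lemma Ex_exists1 P i : Ex P -> Ex (fun v => exists a, P (upd v i a)).
Proof. by move=> [phi H]; exists (fex i phi) => v /=; split=> -[a Ha]; exists a; apply/H. Qed.

Lemma Ex_eqv i j : Ex (fun v => v i = v j).
Proof. by exists (feq (tvar L i) (tvar L j)). Qed.

Lemma Ex_True : Ex (fun _ => True).
Proof. by exists (feq (tvar L 0) (tvar L 0)). Qed.

Lemma notnot (P : Prop) : ~ ~ P <-> P.
Proof. by split=> [H|H K]; [case: (pselect P) => // /H | exact: K]. Qed.

Lemma Ex_or P Q : Ex P -> Ex Q -> Ex (fun v => P v \/ Q v).
Proof.
move=> HP HQ; apply: (Ex_ext (Ex_not (Ex_and (Ex_not HP) (Ex_not HQ)))) => v.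
split=> [H|[H|H] [K1 K2]] //; case: (pselect (P v)) => [?|nP]; first by left.
case: (pselect (Q v)) => [?|nQ]; first by right. by case: H.
Qed.

Lemma Ex_imp P Q : Ex P -> Ex Q -> Ex (fun v => P v -> Q v).
Proof.
move=> HP HQ; apply: (Ex_ext (Ex_or (Ex_not HP) HQ)) => v.
split=> [[H|H] K|H] //; case: (pselect (P v)) => [/H|]; by [right|left].
Qed.

Lemma Ex_forall1 P i : Ex P -> Ex (fun v => forall a, P (upd v i a)).
Proof.
move=> HP; apply: (Ex_ext (Ex_not (Ex_exists1 i (Ex_not HP)))) => v.
split=> [H a|H [a K]]; last exact: K.
by case: (pselect (P (upd v i a))) => // K; case: H; exists a.
Qed.

Lemma Ex_ren P s : injective s -> Ex P -> Ex (fun v => P (fun i => v (s i))).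
Proof. by move=> si [phi H]; exists (fren s phi) => v; rewrite sat_ren // H. Qed.

Definition ovr (v w : nat -> M) (lo hi : nat) : nat -> M :=
  fun i => if (lo <= i) && (i < hi) then w i else v i.

Lemma Ex_exB P lo r : Ex P -> Ex (fun v => exists w, P (ovr v w lo (lo + r))).
Proof.
move=> HP; elim: r => [|r IH].
  apply: (Ex_ext HP) => v; rewrite addn0.
  have E : forall w, ovr v w lo lo = v.
    by move=> w; apply: funext => i; rewrite /ovr; case: leqP => //= /leq_gtF ->.
  by split=> [H|[w]]; [exists v; rewrite E | rewrite E].
apply: (Ex_ext (Ex_exists1 (lo + r) IH)) => v; split.
- move=> [a [w Hw]]; exists (fun i => if i == lo + r then a else w i).
  congr P: Hw; apply: funext => i; rewrite /ovr /upd addnS ltnS.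
  by case: (ltngtP i (lo + r)) => [lt|gt|->]; rewrite ?leq_addr //=; case: (lo <= i).
- move=> [w Hw]; exists (w (lo + r)), w.
  congr P: Hw; apply: funext => i; rewrite /ovr /upd addnS ltnS.
  by case: (ltngtP i (lo + r)) => [lt|gt|->]; rewrite ?leq_addr //=; case: (lo <= i).
Qed.

Lemma Ex_allB P lo r : Ex P -> Ex (fun v => forall w, P (ovr v w lo (lo + r))).
Proof.
move=> HP; apply: (Ex_ext (Ex_not (Ex_exB lo r (Ex_not HP)))) => v.
split=> [H w|H [w K]]; last exact: K.
by case: (pselect (P (ovr v w lo (lo + r)))) => // K; case: H; exists w.
Qed.

Lemma Ex_bigand (Q : nat -> (nat -> M) -> Prop) N :
  (forall i, Ex (Q i)) -> Ex (fun v => forall i, i < N -> Q i v).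
Proof.
move=> HQ; elim: N => [|N IH].
  by apply: (Ex_ext Ex_True) => v; split=> // _ i.
apply: (Ex_ext (Ex_and IH (HQ N))) => v; split.
- by move=> [H1 H2] i; rewrite ltnS leq_eqVlt => /orP [/eqP ->|/H1].
- by move=> H; split=> [i Hi|]; apply: H => //; apply: ltnW.
Qed.

Lemma Ex_subst P N (g : nat -> nat) : Ex P -> Supp N P -> Ex (fun v => P (fun i => v (g i))).
Proof.
move=> HP SP.
pose H := (\max_(i < N) (g i).+1)%N.
have gH : forall i, i < N -> g i < H.
  by move=> i Hi; exact: (@leq_bigmax _ (fun i : 'I_N => (g i).+1) (Ordinal Hi)).
pose Q := fun v : nat -> M => (forall i, i < N -> v (H + i) = v (g i)) /\ P (fun i => v (H + i)).
have EQ : Ex Q.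
  apply: Ex_and; first by apply: Ex_bigand => i; apply: Ex_eqv.
  by apply: Ex_ren => //; exact: addnI.
apply: (Ex_ext (Ex_exB H N EQ)) => v; rewrite /Q /ovr; split.
- move=> [w [H1 H2]]; apply/(SP _ _ _).1: H2 => i Hi.
  by rewrite H1 // leqNgt gH.
- move=> Pv; exists (fun i => v (g (i - H))); split.
  + move=> i Hi; rewrite leq_addr ltn_add2l Hi /= addKn.
    by rewrite leqNgt gH.
  + apply/(SP _ (fun i => v (g i))) => // i Hi.
    by rewrite leq_addr ltn_add2l Hi /= addKn.
Qed.

Lemma Ex_close phi N :
  Ex (fun v => forall v', (forall i, i < N -> v' i = v i) -> sat v' phi).
Proof.
apply: (Ex_ext (Ex_allB N (fbound phi) (Ex_sat phi))) => v; split.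
- move=> H v' Hv'.
  have E : forall i, i < fbound phi -> v' i = ovr v v' N (N + fbound phi) i.
    move=> i Hi; rewrite /ovr; case: (ltnP i N) => [iN|Ni] /=.
      by rewrite /= Hv'.
    by rewrite /= (leq_trans Hi (leq_addl _ _)).
  by apply/(sat_ext E).
- move=> H w; apply: H => i Hi; rewrite /ovr leqNgt Hi //.
Qed.

Lemma Supp_mono N N' P : N <= N' -> Supp N P -> Supp N' P.
Proof. by move=> le SP v v' H; apply: SP => i Hi; apply: H; exact: leq_trans Hi le. Qed.

Lemma Supp_subst N N' P (g : nat -> nat) : Supp N P -> (forall i, i < N -> g i < N') ->
  Supp N' (fun v => P (fun i => v (g i))).
Proof. by move=> SP Hg v v' H; apply: SP => i Hi; apply: H; apply: Hg. Qed.

End Expr.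

Lemma jnl T n m (x : 'I_n -> T) (y : 'I_m -> T) i : join x y (lshift m i) = x i.
Proof.
rewrite /join; case: splitP => [k /= E|k /= E]; first by congr x; apply: val_inj; rewrite /= -E.
by have := ltn_ord i; rewrite E ltnNge leq_addr.
Qed.

Lemma jnr T n m (x : 'I_n -> T) (y : 'I_m -> T) i : join x y (rshift n i) = y i.
Proof.
rewrite /join; case: splitP => [k /= E|k /= E].
  by have := ltn_ord k; rewrite -E ltnNge leq_addr.
by congr y; apply: val_inj; apply/eqP; rewrite /= -(eqn_add2l n) E.
Qed.

Section DefP.
Variable L : language.
Variable M : lstructure L.
Variable d : M.

Definition env n k (x : 'I_n -> M) (b : 'I_k -> M) : nat -> M :=
  fun i => match (insub i : option 'I_n) with
           | Some j => x j
           | None => match (insub (i - n) : option 'I_k) with Some j => b j | None => d end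
           end.

Lemma env_x n k (x : 'I_n -> M) (b : 'I_k -> M) (j : 'I_n) : env x b j = x j.
Proof. by rewrite /env valK. Qed.

Lemma env_b n k (x : 'I_n -> M) (b : 'I_k -> M) (j : 'I_k) : env x b (n + j) = b j.
Proof.
rewrite /env insubF; last by rewrite ltnNge leq_addr.
by rewrite addKn valK.
Qed.

Lemma env_agree n k (x : 'I_n -> M) (b : 'I_k -> M) (g : nat -> M) :
  (forall j : 'I_n, g j = x j) -> (forall j : 'I_k, g (n + j) = b j) ->
  forall i, i < n + k -> g i = env x b i.
Proof.
move=> Hx Hb i Hi; case: (ltnP i n) => [iLn|nLi].
  by have := Hx (Ordinal iLn); rewrite -(env_x x b (Ordinal iLn)).
have Hik : i - n < k by rewrite ltn_subLR.
by have := Hb (Ordinal Hik); rewrite -(env_b x b (Ordinal Hik)) /= subnKC.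
Qed.

Lemma agree_iff n k (x : 'I_n -> M) (b : 'I_k -> M) (v : nat -> M) :
  ((forall i : 'I_n, v i = x i) /\ (forall j : 'I_k, v (n + j) = b j)) <->
  (forall i, i < n + k -> v i = env x b i).
Proof.
split; first by move=> [H1 H2]; apply: env_agree.
move=> H; split.
- by move=> i; rewrite H ?env_x // ltn_addr.
- by move=> j; rewrite H ?env_b // ltn_add2l.
Qed.

Definition DefP (A : set M) n (X : set ('I_n -> M)) :=
  exists k (b : 'I_k -> M) (P : (nat -> M) -> Prop),
    [/\ (forall j, A (b j)), Ex P, Supp (n + k) P & forall x, X x <-> P (env x b)].

Lemma definable_DefP A n (X : set ('I_n -> M)) : definable_in A X -> DefP A X.
Proof.
move=> [phi [k [b [Hb ->]]]].
exists k, b, (fun v => forall v', (forall i, i < n + k -> v' i = v i) -> sat v' phi); split => //.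
- exact: Ex_close.
- move=> v v' H; split=> K w Hw; apply: K => i Hi; rewrite Hw //; [symmetry|]; exact: H.
- move=> x /=; split.
  + move=> H v' Hv'; apply: H; by have [] := (agree_iff x b v').2 Hv'.
  + by move=> H v H1 H2; apply: H; apply/agree_iff.
Qed.

Lemma DefP_definable A n (X : set ('I_n -> M)) : DefP A X -> definable_in A X.
Proof.
move=> [k [b [P [Hb [phi Hphi] SP HX]]]].
exists phi, k, b; split => //; apply/seteqP; split => x /=.
- move=> Xx v H1 H2; apply/Hphi; apply/(SP v (env x b)); first exact/agree_iff.
  exact/HX.
- move=> H; apply/HX/Hphi; apply: H; [exact: env_x | exact: env_b].
Qed.

Lemma DefP_mono A A' n (X : set ('I_n -> M)) : A `<=` A' -> DefP A X -> DefP A' X.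
Proof. by move=> AA [k [b [P [Hb EP SP HX]]]]; exists k, b, P; split => // j; apply: AA. Qed.

Lemma DefP_ext A n (X Y : set ('I_n -> M)) : (forall x, X x <-> Y x) -> DefP A X -> DefP A Y.
Proof. by move=> E [k [b [P [Hb EP SP HX]]]]; exists k, b, P; split => // x; rewrite -E. Qed.

Lemma DefP_T A n : DefP A (@setT ('I_n -> M)).
Proof.
exists 0, (fun j : 'I_0 => d), (fun _ => True); split => //; first by case.
exact: Ex_True.
Qed.

Lemma DefP_C A n (X : set ('I_n -> M)) : DefP A X -> DefP A (~` X).
Proof.
move=> [k [b [P [Hb EP SP HX]]]]; exists k, b, (fun v => ~ P v); split => //.
- exact: Ex_not.
- by move=> v v' H; rewrite (SP v v' H).
- by move=> x /=; rewrite HX.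
Qed.

Definition shf (n k1 : nat) (i : nat) := if i < n then i else i + k1.

Lemma DefP_I A n (X Y : set ('I_n -> M)) : DefP A X -> DefP A Y -> DefP A (X `&` Y).
Proof.
move=> [k1 [b1 [P1 [Hb1 EP1 SP1 HX]]]] [k2 [b2 [P2 [Hb2 EP2 SP2 HY]]]].
exists (k1 + k2), (join b1 b2), (fun v => P1 v /\ P2 (fun i => v (shf n k1 i))); split.
- by move=> j; rewrite /join; case: (split j).
- by apply: Ex_and => //; apply: (Ex_subst _ EP2 SP2).
- move=> v v' H; rewrite (SP1 v v'); last by move=> i Hi; apply: H; rewrite addnA ltn_addr.
  suff -> : P2 (fun i => v (shf n k1 i)) <-> P2 (fun i => v' (shf n k1 i)) by [].
  apply: SP2 => i Hi; apply: H; rewrite /shf; case: ifP => [iLn|]; lia.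
- move=> x /=; rewrite HX HY.
  rewrite (SP1 (env x (join b1 b2)) (env x b1)); last first.
    apply: env_agree => [j|j]; first by rewrite env_x.
    have -> : n + j = n + lshift k2 j by [].
    by rewrite env_b jnl.
  suff -> : P2 (env x b2) <-> P2 (fun i => env x (join b1 b2) (shf n k1 i)) by [].
  apply: SP2 => i Hi; symmetry; move: i Hi; apply: env_agree => [j|j]; rewrite /shf.
    by rewrite ltn_ord env_x.
  rewrite ltnNge leq_addr /=.
  have -> : n + j + k1 = n + rshift k1 j by rewrite /=; lia.
  by rewrite env_b jnr.
Qed.

Definition fpre p q (pi : 'I_q -> 'I_p) (i : nat) : nat :=
  match (insub i : option 'I_q) with Some j => nat_of_ord (pi j) | None => p + (i - q) end.

Lemma DefP_pre A p q (pi : 'I_q -> 'I_p) (D : set ('I_q -> M)) :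
  DefP A D -> DefP A [set y : 'I_p -> M | D (fun i => y (pi i))].
Proof.
move=> [k [b [P [Hb EP SP HX]]]].
exists k, b, (fun v => P (fun i => v (fpre pi i))); split => //.
- exact: Ex_subst EP SP.
- apply: Supp_subst SP _ => i Hi; rewrite /fpre; case: insubP => [j _ Ej|Hn].
    by apply: leq_trans (ltn_ord _) (leq_addr _ _).
  move: Hn; rewrite -leqNgt => Hn; lia.
- move=> y /=; rewrite HX; apply: SP => i Hi; symmetry; move: i Hi; apply: env_agree => [j|j].
    by rewrite /fpre valK env_x.
  rewrite /fpre insubF; last by rewrite ltnNge leq_addr.
  by rewrite addKn env_b.
Qed.

Definition ffix p q (i : nat) : nat :=
  match (insub i : option 'I_p) with
  | Some j => q + j
  | None => match (insub (i - p) : option 'I_q) with Some j => nat_of_ord j | None => i end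
  end.

Lemma DefP_fix A p q (c : 'I_p -> M) (Z : set ('I_(p + q) -> M)) :
  DefP A Z -> DefP (A `|` range c) [set y : 'I_q -> M | Z (join c y)].
Proof.
move=> [k [b [P [Hb EP SP HX]]]].
exists (p + k), (join c b), (fun v => P (fun i => v (ffix p q i))); split.
- move=> j; rewrite /join; case: (split j) => j'; [right; exists j' | left; apply: Hb] => //.
- exact: Ex_subst EP SP.
- apply: Supp_subst SP _ => i Hi; rewrite /ffix; case: insubP => [j _ Ej|Hn].
    by move: (ltn_ord j) => ?; lia.
  case: insubP => [j _ Ej'|Hn']; first by move: (ltn_ord j) => ?; lia.
  move: Hn Hn'; rewrite -!leqNgt => Hn Hn'; lia.
- move=> y /=; rewrite HX; apply: SP => i Hi; symmetry; move: i Hi; apply: env_agree => [j|j].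
  + case: (splitP j) => j' E.
    * have -> : j = lshift q j' by apply: val_inj.
      rewrite jnl /ffix /= valK.
      have -> : q + j' = q + lshift k j' by [].
      by rewrite env_b jnl.
    * have -> : j = rshift p j' by apply: val_inj.
      rewrite jnr /ffix /= insubF; last by rewrite ltnNge leq_addr.
      by rewrite addKn valK env_x.
  + rewrite /ffix insubF; last by rewrite ltnNge -addnA leq_addr.
    rewrite insubF; last by rewrite -addnA addKn ltnNge leq_addr.
    have -> : p + q + j = q + rshift p j by rewrite /=; lia.
    by rewrite env_b jnr.
Qed.

Definition fproj p q k (i : nat) : nat :=
  match (insub i : option 'I_p) with
  | Some j => nat_of_ord j
  | None => match (insub (i - p) : option 'I_q) with Some j => p + k + j | None => i - q end
  end.

Lemma DefP_proj A p q (Z : set ('I_(p + q) -> M)) :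
  DefP A Z -> DefP A [set y : 'I_p -> M | exists w, Z (join y w)].
Proof.
move=> [k [b [P [Hb EP SP HX]]]].
pose H := p + k.
pose Q := fun v : nat -> M => P (fun i => v (fproj p q k i)).
have SQ : Supp (H + q) Q.
  apply: Supp_subst SP _ => i Hi; rewrite /fproj; case: insubP => [j _ Ej|Hn].
    by move: (ltn_ord j) => ?; lia.
  case: insubP => [j _ Ej'|Hn']; first by move: (ltn_ord j) => ?; lia.
  move: Hn Hn'; rewrite -!leqNgt => Hn Hn'; lia.
have core : forall y w, Q (ovr (env y b) w H (H + q)) <-> Z (join y (fun j => w (H + j))).
  move=> y w; rewrite HX /Q; apply: SP; apply: env_agree => [j|j].
  + case: (splitP j) => j' E.
    * have -> : j = lshift q j' by apply: val_inj.
      rewrite jnl /fproj /= valK /ovr.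
      have -> : (H <= j') = false by apply/negbTE; rewrite -ltnNge /H; exact: leq_trans (ltn_ord _) (leq_addr _ _).
      by rewrite /= env_x.
    * have -> : j = rshift p j' by apply: val_inj.
      rewrite jnr /fproj /= insubF; last by rewrite ltnNge leq_addr.
      rewrite addKn valK /ovr leq_addr ltn_add2l ltn_ord /=.
      by [].
  + rewrite /fproj insubF; last by rewrite ltnNge -addnA leq_addr.
    rewrite insubF; last by rewrite -addnA addKn ltnNge leq_addr.
    have -> : p + q + j - q = p + j by lia.
    rewrite /ovr.
    have -> : (H <= p + j) = false by apply/negbTE; rewrite -ltnNge /H ltn_add2l.
    by rewrite env_b.
exists k, b, (fun v => exists w, Q (ovr v w H (H + q))); split => //.
- exact: Ex_exB (Ex_subst _ EP SP).
- move=> v v' Hv.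
  have E : forall w, Q (ovr v w H (H + q)) <-> Q (ovr v' w H (H + q)).
    move=> w; apply: SQ => i Hi; rewrite /ovr; case: ifP => // /negbT.
    by rewrite negb_and Hi orbF -ltnNge => /Hv.
  by split=> -[w Hw]; exists w; apply/E.
- move=> y /=; split.
  + move=> [w' Hw']; exists (fun i => match (insub (i - H) : option 'I_q) with Some j => w' j | None => d end).
    apply/core; congr Z: Hw'; congr join; apply: funext => j; by rewrite addKn valK.
  + by move=> [w /core Hw]; exists (fun j => w (H + j)).
Qed.

Lemma DefP_diag A : DefP A [set y : 'I_2 -> M | y ord0 = y ord_max].
Proof.
exists 0, (fun _ => d), (fun v => v 0 = v 1); split => //; first by case.
- exact: Ex_eqv.
- by move=> v v' H; rewrite !H.
- by move=> y /=; rewrite -(env_x y (fun _ : 'I_0 => d) ord0) -(env_x y (fun _ : 'I_0 => d) ord_max).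
Qed.

Lemma DefP_bigI A n r (X : 'I_r -> set ('I_n -> M)) :
  (forall i, DefP A (X i)) -> DefP A [set y | forall i, X i y].
Proof.
move=> HX.
suff H : forall s : seq 'I_r, DefP A [set y | forall i, i \in s -> X i y].
  by apply: DefP_ext (H (enum 'I_r)) => y /=; split=> K i; [apply: K; rewrite mem_enum | move=> _; apply: K].
elim=> [|a s IH].
  by apply: DefP_ext (DefP_T A n) => y /=; split.
apply: DefP_ext (DefP_I (HX a) IH) => y /=; split.
- by move=> [H1 H2] i; rewrite in_cons => /orP [/eqP ->|/H2].
- by move=> H; split=> [|i Hi]; apply: H; rewrite in_cons ?eqxx ?Hi ?orbT.
Qed.

End DefP.

Lemma definable_inst1 L (M : lstructure L) (phi : formula L) k (b : 'I_k -> M) :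
  definable_in setT [set y : 'I_1 -> M | inst1 phi b (y ord0)].
Proof.
exists phi, k, b; split => //; apply/seteqP; split => y /=.
- move=> H v H1 H2; apply: H => // ; first by rewrite (H1 ord0).
- move=> H v H1 H2; apply: H => // i; case: i => [[|//] Hi].
  by rewrite H1; congr y; apply: val_inj.
Qed.

Section Acl.
Variable L : language.
Variable M : lstructure L.

Lemma definable_mono (A A' : set M) n (X : set ('I_n -> M)) :
  A `<=` A' -> definable_in A X -> definable_in A' X.
Proof. by move=> AA [phi [k [b [Hb E]]]]; exists phi, k, b; split => // j; apply: AA. Qed.

Lemma acl_mono (A A' : set M) a : A `<=` A' -> acl_in A a -> acl_in A' a.
Proof. by move=> AA [D [HD [FD Da]]]; exists D; split => //; exact: definable_mono HD. Qed.

Lemma acl_mem (A : set M) a : A a -> acl_in A a.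
Proof.
move=> Aa; exists [set (fun _ => a)]; split; last by split => //; exact: finite_set1.
exists (feq (tvar L 0) (tvar L 1)), 1, (fun _ => a); split => //.
apply/seteqP; split => t /=.
- by move=> -> v H1 H2 /=; rewrite (H1 ord0) -(H2 ord0).
- move=> H; apply: funext => i.
  have E := H (fun j => if j == 0 then t ord0 else a) _ _.
  have -> : i = ord0 by apply: val_inj; case: i => [[]].
  rewrite /= in E; rewrite E //.
  by move=> j; case: j => [[]] //= ?; congr t; apply: val_inj.
Qed.

Definition Ind (B : set M) k (c : 'I_k -> M) :=
  forall i, ~ acl_in (B `|` (fun y => exists j, j != i /\ y = c j)) (c i).

Lemma Ind_inj B k (c : 'I_k -> M) : Ind B c -> injective c.
Proof.
move=> H i j E; case: (eqVneq i j) => // ne; case: (H i).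
by apply: acl_mem; right; exists j; split; [rewrite eq_sym|].
Qed.

Lemma dim_ge_Ind n (a : 'I_n -> M) B k :
  dim_ge a B k <-> exists s : 'I_k -> 'I_n, injective s /\ Ind B (fun i => a (s i)).
Proof. by []. Qed.

Hypothesis exch : acl_exchange M.

Lemma matroid B n (u : 'I_n -> M) k (c : 'I_k -> M) :
  Ind B c ->
  (forall C, B `<=` C -> (forall l, acl_in C (u l)) -> forall i, acl_in C (c i)) ->
  exists c' : 'I_k -> M, Ind B c' /\ forall i, exists l, c' i = u l.
Proof.
move=> Ic Gc.
suff H : forall r, r <= k -> exists c' : 'I_k -> M, [/\ Ind B c',
   (forall C, B `<=` C -> (forall l, acl_in C (u l)) -> forall i, acl_in C (c' i)) &
   forall i : 'I_k, i < r -> exists l, c' i = u l].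
  by have [c' [I1 _ H2]] := H k (leqnn k); exists c'; split => // i; apply: H2.
elim=> [|r IH] rk; first by exists c; split.
have [c' [I1 G1 H1]] := IH (ltnW rk).
pose i0 := Ordinal rk.
case: (pselect (exists l, c' i0 = u l)) => [Hl|Hnl].
  exists c'; split => // i; rewrite ltnS leq_eqVlt => /orP [/eqP Ei|/H1 //].
  by have -> : i = i0 by apply: val_inj.
pose C0 := B `|` (fun y => exists j, j != i0 /\ y = c' j).
have [l Hl] : exists l, ~ acl_in C0 (u l).
  apply: contrapT => K; apply: (I1 i0); apply: G1 => [y|l]; first by left.
  by apply: contrapT => K'; apply: K; exists l.
pose c'' := fun i => if i == i0 then u l else c' i.
exists c''; split.
- move=> i; rewrite /c''; case: (eqVneq i i0) => [->|ne].
  + move=> K; apply: Hl; apply: acl_mono K => y [By|[j [ne Ej]]]; first by left.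
    by right; exists j; split => //; move: Ej; rewrite /c'' (negbTE ne).
  + pose C1 := B `|` (fun y => exists j, [/\ j != i, j != i0 & y = c' j]).
    move=> K.
    have K1 : acl_in (C1 `|` [set u l]) (c' i).
      apply: acl_mono K => y [By|[j [nj Ej]]]; first by left; left.
      move: Ej; rewrite /c''; case: (eqVneq j i0) => [_ ->|nj0 ->]; first by right.
      by left; right; exists j.
    have K2 : ~ acl_in C1 (c' i).
      move=> K2; apply: (I1 i); apply: acl_mono K2 => y [By|[j [nj _ Ej]]]; first by left.
      by right; exists j.
    apply: Hl; have := exch K1 K2; apply: acl_mono => y [[By|[j [nj nj0 Ej]]]|->].
    * by left.
    * by right; exists j.
    * by right; exists i.
- move=> C BC Hu i; rewrite /c''; case: ifP => _; [exact: Hu | exact: G1].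
- move=> i; rewrite ltnS leq_eqVlt => /orP [/eqP Ei|Hi].
    by exists l; rewrite /c'' (_ : i = i0) ?eqxx //; apply: val_inj.
  rewrite /c''; case: ifP => [_|_]; [by exists l | exact: H1].
Qed.

Lemma matroid_dim B n m (u : 'I_n -> M) (w : 'I_m -> M) k :
  (forall C, B `<=` C -> (forall l, acl_in C (u l)) -> forall j, acl_in C (w j)) ->
  dim_ge (join u w) B k -> dim_ge u B k.
Proof.
move=> Gw [s [si Is]].
have G : forall C, B `<=` C -> (forall l, acl_in C (u l)) -> forall i, acl_in C (join u w (s i)).
  move=> C BC Hu i; rewrite /join; case: (split (s i)) => j; [exact: Hu | exact: Gw].
have [c' [Ic' Hc']] := matroid Is G.
have [s' Hs'] := choice Hc'.
exists s'; split.
- by move=> i j E; apply: (Ind_inj Ic'); rewrite !Hs' E.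
- have E : (fun i => u (s' i)) = c' by apply: funext => i; rewrite Hs'.
  by move: Ic'; rewrite -E.
Qed.

End Acl.

Lemma card_le_inj k n (s : 'I_k -> 'I_n) : injective s -> k <= n.
Proof. by move=> si; have := @leq_card _ _ s si; rewrite !card_ord. Qed.

Lemma dim_ge_join L (M : lstructure L) n m (x : 'I_n -> M) (y : 'I_m -> M) A k :
  dim_ge x A k -> dim_ge (join x y) A k.
Proof.
move=> [s [si Is]]; exists (fun i => lshift m (s i)); split.
  by move=> i j /lshift_inj /si.
have E : (fun i => join x y (lshift m (s i))) = (fun i => x (s i)) by apply: funext => i; rewrite jnl.
have : Ind A (fun i => x (s i)) by [].
by rewrite -E.
Qed.

Lemma finite_funset T n (F : 'I_n -> set T) :
  (forall l, finite_set (F l)) -> finite_set [set u : 'I_n -> T | forall l, F l (u l)].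
Proof.
elim: n F => [|n IH] F HF.
  case: (pselect (exists u : 'I_0 -> T, forall l, F l (u l))) => [[u0 _]|nE].
    apply: (sub_finite_set _ (finite_set1 u0)) => u _ /=.
    by apply: funext => -[].
  by apply: (sub_finite_set _ (finite_set0 _)) => u Hu; apply: nE; exists u.
pose cns := fun (p : T * ('I_n -> T)) (l : 'I_n.+1) =>
  match unlift ord0 l with Some l' => p.2 l' | None => p.1 end.
apply: (sub_finite_set _ (finite_image cns (finite_setX (HF ord0) (IH (fun l => F (lift ord0 l)) (fun l => HF _))))).
move=> u Hu; exists (u ord0, fun l => u (lift ord0 l)); first by split => //= l; apply: Hu.
apply: funext => l; rewrite /cns; case: unliftP => [l' ->|->] //.
Qed.

Lemma join_inj T n m (x x' : 'I_n -> T) (y y' : 'I_m -> T) :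
  join x y = join x' y' -> x = x' /\ y = y'.
Proof.
move=> E; split; apply: funext => i.
- by rewrite -(jnl x y) -(jnl x' y') E.
- by rewrite -(jnr x y) -(jnr x' y') E.
Qed.

Section Graph.
Variable L : language.
Variable M : lstructure L.
Variable d : M.

Lemma graph_def_dom (B : set M) n m (X : set ('I_n -> M)) (f : ('I_n -> M) -> ('I_m -> M)) :
  definable_in B (graph_on f X) -> definable_in B X.
Proof.
move=> /(definable_DefP d) /DefP_proj H; apply: (DefP_definable (d := d)).
apply: (DefP_ext _ H) => u /=; split.
- by move=> [w [u' [Xu' /join_inj [-> _]]]].
- by move=> Xu; exists (f u), u.
Qed.

Lemma graph_acl (B C : set M) n m (X : set ('I_n -> M)) (f : ('I_n -> M) -> ('I_m -> M)) u j :
  definable_in B (graph_on f X) -> B `<=` C -> (forall l, acl_in C (u l)) -> X u ->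
  acl_in C (f u j).
Proof.
move=> DZ BC Hu Xu.
have [E HE] := choice Hu.
pose Box := [set u' : 'I_n -> M | forall l, E l (fun _ => u' l)].
have DBox : DefP d C Box.
  apply: DefP_bigI => l; apply: (DefP_ext _ (DefP_pre (fun _ : 'I_1 => l) (definable_DefP d (HE l).1))).
  by [].
have DZ' : DefP d C (graph_on f X) by apply: DefP_mono BC (definable_DefP d DZ).
pose N := n + m.
pose pa := fun l : 'I_n => rshift 1 (lshift m l) : 'I_(1 + N).
pose pc := fun i : 'I_2 => if i == ord0 then lshift N (ord0 : 'I_1) else rshift 1 (rshift n j) : 'I_(1 + N).
pose T := [set z : 'I_(1 + N) -> M | (Box (fun l => z (pa l)) /\ graph_on f X (fun i => z (rshift 1 i)))
                                  /\ z (lshift N ord0) = z (rshift 1 (rshift n j))].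
have DT : DefP d C T.
  have H1 := DefP_pre pa DBox.
  have H2 := DefP_pre (@rshift 1 N) DZ'.
  have H3 := DefP_pre pc (DefP_diag d C).
  have H4 := DefP_I (DefP_I H1 H2) H3.
  apply: (DefP_ext _ H4).
  by move=> z /=; rewrite /pc /=.
pose D' := [set t : 'I_1 -> M | exists z, T (join t z)].
have DD' : DefP d C D' by exact: DefP_proj DT.
exists D'; split; first exact: (DefP_definable DD').
split.
- pose Fl := fun l => [set t ord0 | t in E l].
  have FB : finite_set Box.
    apply: (sub_finite_set _ (finite_funset (F := Fl) (fun l => finite_image _ (HE l).2.1))).
    by move=> u' Hu' l; exists (fun _ => u' l); [apply: Hu'|].
  apply: (sub_finite_set _ (finite_image (fun u' => fun _ : 'I_1 => f u' j) FB)).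
  move=> t [z [[Bz [u'' [Xu'' Ez]]] Et]].
  have Ez' : z = join u'' (f u'').
    by rewrite -Ez; apply: funext => i; rewrite jnr.
  exists u''.
    move=> l; have := Bz l; rewrite /pa jnr Ez' jnl; exact.
  apply: funext => i; rewrite (_ : i = ord0); last by apply: val_inj; case: i => [[]].
  by move: Et; rewrite jnl jnr Ez' jnr.
- exists (join u (f u)); split; [split|].
  + by move=> l; rewrite /pa jnr jnl; apply: (HE l).2.2.
  + exists u; split => //; apply: funext => i; by rewrite jnr.
  + by rewrite jnl jnr jnr.
Qed.

End Graph.

Local Open Scope ring_scope.

Lemma dim_tuple_le_set L (M : lstructure L) n (A : set M) (W : set ('I_n -> M)) a :
  countable A -> definable_in A W -> W a -> Posz (dim_tuple a A) <= dim_set W.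
Proof.
move=> cA DW Wa; rewrite /dim_set asboolF; last by move=> E; rewrite E in Wa.
rewrite lez_nat; apply/bigmax_leqP => k Hk.
apply: (@leq_bigmax_cond _ _ (fun k : 'I_n.+1 => nat_of_ord k) k).
by apply: asboolT; exists A; split => //; split => //; exists a => //; apply/asboolP.
Qed.

Lemma dim_tuple_join L (M : lstructure L) n m (A : set M) (x : 'I_n -> M) (y : 'I_m -> M) :
  (dim_tuple x A <= dim_tuple (join x y) A)%N.
Proof.
apply/bigmax_leqP => k /asboolP Hk.
have Hk' : (k < (n + m).+1)%N by rewrite ltnS; apply: leq_trans (leq_addr _ _); rewrite -ltnS.
apply: (@leq_bigmax_cond _ _ (fun k : 'I_(n + m).+1 => nat_of_ord k) (Ordinal Hk')).
by apply: asboolT; apply: dim_ge_join.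
Qed.

Lemma dim_graph_le L (M : lstructure L) (d : M) n m (X : set ('I_n -> M)) (f : ('I_n -> M) -> ('I_m -> M)) x0 :
  acl_exchange M -> X x0 -> dim_set (graph_on f X) <= dim_set X.
Proof.
move=> exch Xx0; rewrite /dim_set asboolF; last first.
  move=> E; have : graph_on f X (join x0 (f x0)) by exists x0.
  by rewrite E.
rewrite asboolF; last by move=> E; rewrite E in Xx0.
rewrite lez_nat; apply/bigmax_leqP => k /asboolP [B [cB [DZ [z [u [Xu ->]] dz]]]].
have dU : dim_ge u B k.
  apply: (matroid_dim exch (w := f u)) dz => C BC Hu j.
  exact: (graph_acl (f u j) j DZ BC Hu Xu).
have Hk : (k < n.+1)%N by have [s [si _]] := dU; rewrite ltnS; exact: card_le_inj si.
apply: (@leq_bigmax_cond _ _ (fun k : 'I_n.+1 => nat_of_ord k) (Ordinal Hk)).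
apply: asboolT; exists B; split => //; split; first exact: (graph_def_dom d) DZ.
by exists u.
Qed.

Definition cbox (T : Type) p (O : 'I_p -> set T) : set ('I_p -> T) := [set y | forall i, O i (y i)].

Section Topo.
Variable T : Type.
Variable tau : set (set T).
Hypothesis topo : is_topology tau.

Lemma prod_open_cbox p (O : 'I_p -> set T) : (forall i, tau (O i)) -> prod_open tau (cbox O).
Proof. move=> HO y Hy; exists O; split; last by []. by move=> i; split; [apply: HO | apply: Hy]. Qed.

Lemma prod_openI p (W W' : set ('I_p -> T)) :
  prod_open tau W -> prod_open tau W' -> prod_open tau (W `&` W').
Proof.
move=> HW HW' y [Wy W'y].
have [V [HV sV]] := HW y Wy; have [V' [HV' sV']] := HW' y W'y.
exists (fun i => V i `&` V' i); split.
- move=> i; split; last by split; [apply: (HV i).2 | apply: (HV' i).2].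
  by case: topo => _ HI _; apply: HI; [apply: (HV i).1 | apply: (HV' i).1].
- by move=> z Hz; split; [apply: sV => i; case: (Hz i) | apply: sV' => i; case: (Hz i)].
Qed.

Lemma prod_openT p : prod_open tau (@setT ('I_p -> T)).
Proof. by move=> y _; exists (fun _ => setT); split => //; case: topo. Qed.

Lemma cont_pre p q (h : ('I_p -> T) -> ('I_q -> T)) (D : set ('I_p -> T)) (W : set ('I_q -> T)) :
  continuous_on tau h D -> prod_open tau W ->
  exists W', prod_open tau W' /\ forall v, D v -> (W (h v) <-> W' v).
Proof.
move=> hc HW.
exists (fun v => exists v0 O, [/\ D v0, prod_open tau O, O v0, O v &
                               forall u', D u' -> O u' -> W (h u')]); split.
- move=> v [v0 [O [Dv0 PO Ov0 Ov HO]]].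
  have [V [HV sV]] := PO v Ov; exists V; split => // z Vz.
  by exists v0, O; split => //; apply: sV.
- move=> v Dv; split.
  + move=> Wv; have [O [PO Ov HO]] := hc v Dv W HW Wv.
    by exists v, O; split.
  + by move=> [v0 [O [_ _ _ Ov HO]]]; apply: HO.
Qed.


End Topo.

Lemma basis_box L (R : lstructure L) (tau : set (set R)) (phi : formula L) kB :
  (forall (U : set R) (a : R), tau U -> U a ->
     exists b : 'I_kB -> R, inst1 phi b a /\ inst1 phi b `<=` U) ->
  forall p (W : set ('I_p -> R)) z, prod_open tau W -> W z ->
  exists bb : 'I_p -> 'I_kB -> R,
    (forall i, inst1 phi (bb i) (z i)) /\ cbox (fun i => inst1 phi (bb i)) `<=` W.
Proof.
move=> basis p W z PW Wz; have [V [HV sV]] := PW z Wz.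
have [bb Hbb] := choice (fun i => basis (V i) (z i) (HV i).1 (HV i).2).
exists bb; split; first by move=> i; apply: (Hbb i).1.
by move=> y Hy; apply: sV => i; apply: (Hbb i).2; apply: Hy.
Qed.

Lemma cbox_def L (M : lstructure L) (d : M) A p (O : 'I_p -> set M) :
  (forall i, definable_in A [set t : 'I_1 -> M | O i (t ord0)]) -> DefP d A (cbox O).
Proof.
move=> H; apply: DefP_bigI => i.
by apply: (DefP_ext _ (DefP_pre (fun _ : 'I_1 => i) (definable_DefP d (H i)))).
Qed.

Lemma join_split T n m (z : 'I_(n + m) -> T) :
  z = join (fun j => z (lshift m j)) (fun j => z (rshift n j)).
Proof.
by apply: funext => i; rewrite /join; case: splitP => j E; congr z; apply: val_inj; rewrite /= -E.
Qed.

Lemma cbox_join T n m (O1 : 'I_n -> set T) (O2 : 'I_m -> set T) u w :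
  cbox (join O1 O2) (join u w) <-> cbox O1 u /\ cbox O2 w.
Proof.
split.
- by move=> H; split => j; [have := H (lshift m j); rewrite !jnl | have := H (rshift n j); rewrite !jnr].
- by move=> [H1 H2] i; rewrite /join; case: (split i) => j; [apply: H1 | apply: H2].
Qed.

Import Order.TTheory.

Lemma S_setT_trivial L (R : lstructure L) tau S p (z0 : 'I_p -> R) :
  lore R tau S -> (forall a b : 'I_p -> R, a = b) -> S p setT.
Proof.
move=> [_ _ _ _ Siv] Heq.
have b0 : 'I_0 -> R by case=> m; rewrite ltn0.
have DT : definable_in (@set0 R) (@setT ('I_p -> R)).
  exists (feq (tvar L 0) (tvar L 0)), 0, b0; split; first by case.
  by apply/seteqP; split => // a _ v _ _.
have [X' [rX' DX' SX' dlt]] := Siv p set0 setT (countable0 _) DT (ex_intro _ z0 I).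
case: (pselect (X' z0)) => [Xz|nXz].
  by have -> : (@setT ('I_p -> R)) = X' by apply/seteqP; split => // a _; rewrite (Heq a z0).
have E : setT `\` X' = setT by apply/seteqP; split => // a _; split => //; rewrite (Heq a z0).
by move: dlt; rewrite E ltxx.
Qed.

Lemma empty_case L (R : lstructure L) (tau : set (set R))
    (S : forall n : nat, set (set ('I_n -> R))) (n m : nat)
    (X : set ('I_n -> R)) (Y : set ('I_m -> R))
    (f : ('I_n -> R) -> ('I_m -> R)) (x : 'I_n -> R) :
  is_topology tau -> lore R tau S -> (forall u, X u -> Y (f u)) -> X x ->
  ~ (exists r : R, True) ->
  exists U V, nbhd_in tau X x U /\ nbhd_in tau Y (f x) V /\ loric_homeo tau S f U V.
Proof.
move=> topo lor fXY Xx nR.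
have Eq : forall p (a b : 'I_p -> R), a = b.
  by move=> p a b; apply: funext => i; case: nR; exists (a i).
have ro : forall p (Z : set ('I_p -> R)), rel_open tau Z Z.
  move=> p Z; split => //; exists setT; split; first exact: prod_openT.
  by rewrite setTI.
have cont : forall p q (g : ('I_p -> R) -> ('I_q -> R)) D, continuous_on tau g D.
  move=> p q g D u _ W _ Wgu; exists setT; split => //; first exact: prod_openT.
  by move=> u' _ _; rewrite (Eq _ (g u') (g u)).
exists X, Y; split; [|split].
- by split => //; exists X; split => //; exact: ro.
- split => //; exists Y; split; [exact: ro | exact: fXY | by []].
- split.
    split; [exact: fXY | exact: cont | ].
    exists (fun _ => x); split; [by move=> v _ | move=> u _; exact: Eq | move=> v _; exact: Eq | exact: cont].
  have -> : graph_on f X = setT.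
    by apply/seteqP; split => // z _; exists x; split => //; exact: Eq.
  exact: (S_setT_trivial (join x (f x)) lor (Eq _)).
Qed.

Import Order.TTheory.

Unset Implicit Arguments. Set Strict Implicit.

Theorem lemma2p16 (L : language) (R : lstructure L) (tau : set (set R))
    (S : forall n : nat, set (set ('I_n -> R))) (n m : nat) (A : set R)
    (X : set ('I_n -> R)) (Y : set ('I_m -> R))
    (f : ('I_n -> R) -> ('I_m -> R)) (x : 'I_n -> R) :
  t_minimal R tau -> lore R tau S ->
  countable A -> definable_in A X -> definable_in A Y ->
  dim_set X = dim_set Y ->
  (forall u, X u -> Y (f u)) -> definable_in A (graph_on f X) ->
  (forall y, finite_set (fun u => X u /\ f u = y)) ->
  generic A X x ->
  exists U V, nbhd_in tau X x U /\ nbhd_in tau Y (f x) V /\ loric_homeo tau S f U V.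
Proof.
move=> [HGS [phiB [kB [Bopen Bbasis]]] noiso] lor cA DX DY dXY fXY DZ ffin gen.
have [[topo _] [[geo _] _] H3 H4 H5] := HGS.
case: (pselect (exists r : R, True)) => [[d _]|nR]; last first.
  exact: empty_case topo lor fXY gen.1 nR.
have exch : acl_exchange R by apply: geo => phi; exact: iff_refl.
pose Z := graph_on f X.
have Zx : Z (join x (f x)) by exists x; split => //; exact: gen.1.
have dZX : dim_set Z = dim_set X.
  apply: le_anti; apply/andP; split; first exact: (dim_graph_le d f exch gen.1).
  rewrite -gen.2; apply: le_trans (dim_tuple_le_set cA DZ Zx).
  by rewrite lez_nat dim_tuple_join.
have genZ : generic A Z (join x (f x)).
  split => //; apply: le_anti; apply/andP; split; first exact: dim_tuple_le_set cA DZ Zx.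
  by rewrite dZX -gen.2 lez_nat dim_tuple_join.
have ZXY : Z `<=` prodset X Y.
  by move=> z [u [Xu ->]]; exists u, (f u); split => //; exact: fXY.
have fib1 : forall x', finite_set [set y' | Z (join x' y')].
  move=> x'; apply: (sub_finite_set _ (finite_set1 (f x'))).
  by move=> y' [u [Xu /join_inj [-> ->]]].
have fib2 : forall y', finite_set [set x' | Z (join x' y')].
  move=> y'; apply: (sub_finite_set _ (ffin y')).
  by move=> x' [u [Xu /join_inj [-> ->]]].
have [U0 [V0 [rU0 U0x rV0 V0fx [g [[gmap gcont [h [hmap hg hgh hcont]]] Egr]]]]] :=
  H5 n m A X Y Z x (f x) cA DX DY DZ dXY (etrans (esym dXY) (esym dZX)) ZXY fib1 fib2 genZ.
have gf : forall u, U0 u -> g u = f u.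
  move=> u U0u; have : graph_on g U0 (join u (g u)) by exists u.
  by rewrite -Egr => -[[u' [Xu' /join_inj [-> ->]]] _].
have [U0X [WU [PWU EU0]]] := rU0.
have [V0Y [WV [PWV EV0]]] := rV0.
have hf : forall u, U0 u -> h (f u) = u by move=> u U0u; rewrite -gf // hg.
have [_ _ _ [Siii1 _] Siv] := lor.
have [Z' [[Z'Z [W0 [PW0 EZ']]] DZ' SZ' dlt]] := Siv (n + m) A Z cA DZ (ex_intro _ _ Zx).
have Z'x : Z' (join x (f x)).
  apply: contrapT => nZ'.
  have DD : definable_in A (Z `\` Z').
    apply: (DefP_definable (d := d)); apply: (DefP_ext _ (DefP_I (definable_DefP d DZ) (DefP_C (definable_DefP d DZ')))).
    by [].
  have := le_lt_trans (dim_tuple_le_set cA DD (conj Zx nZ')) dlt.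
  by rewrite -genZ.2 ltxx.
have W0x : W0 (join x (f x)) by move: Z'x; rewrite EZ' => -[].
have [bb0 [Hbb0 sbb0]] := basis_box Bbasis PW0 W0x.
have WUx : WU x by move: U0x; rewrite EU0 => -[].
have WVfx : WV (f x) by move: V0fx; rewrite EV0 => -[].
have [bbU [HbbU sbbU]] := basis_box Bbasis PWU WUx.
have [bbV [HbbV sbbV]] := basis_box Bbasis PWV WVfx.
pose O0 := fun i => inst1 phiB (bb0 i).
pose O1 := fun j => inst1 phiB (bbU j) `&` O0 (lshift m j).
pose O2 := fun j => inst1 phiB (bbV j) `&` O0 (rshift n j).
pose C1 := cbox O1. pose C2 := cbox O2.
have tauO1 : forall j, tau (O1 j) by move=> j; case: topo => _ HI _; apply: HI; apply: Bopen.
have tauO2 : forall j, tau (O2 j) by move=> j; case: topo => _ HI _; apply: HI; apply: Bopen.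
have C1x : C1 x.
  move=> j; split; first exact: HbbU.
  by have := Hbb0 (lshift m j); rewrite jnl.
have C2fx : C2 (f x).
  move=> j; split; first exact: HbbV.
  by have := Hbb0 (rshift n j); rewrite jnr.
have C1WU : C1 `<=` WU by move=> u Hu; apply: sbbU => j; case: (Hu j).
have C2WV : C2 `<=` WV by move=> v Hv; apply: sbbV => j; case: (Hv j).
have C12W0 : forall u w, C1 u -> C2 w -> W0 (join u w).
  move=> u w Hu Hw; apply: sbb0 => i; case: (splitP i) => j E.
  - have -> : i = lshift m j by apply: val_inj.
    by rewrite jnl; case: (Hu j).
  - have -> : i = rshift n j by apply: val_inj.
    by rewrite jnr; case: (Hw j).
pose U := [set u | X u /\ C1 u /\ C2 (f u)].
pose V := [set v | V0 v /\ U (h v)].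
have UU0 : U `<=` U0 by move=> u [Xu [C1u _]]; rewrite EU0; split => //; apply: C1WU.
have Ux : U x by split; [exact: gen.1 | split].
pose W := cbox (join O1 O2).
have tauO : forall i, tau (join O1 O2 i) by move=> i; rewrite /join; case: (split i) => j; [apply: tauO1 | apply: tauO2].
have PW : prod_open tau W by apply: prod_open_cbox.
have Egraph : graph_on f U = W `&` Z'.
  apply/seteqP; split => z.
  - move=> [u [[Xu [C1u C2fu]] ->]]; split; first by apply/cbox_join.
    by rewrite EZ'; split; [apply: C12W0 | exists u].
  - move=> [Wz /Z'Z [u [Xu Ez]]]; exists u; split => //.
    by move: Wz; rewrite Ez => /cbox_join [C1u C2fu].
have SG : S (n + m) (graph_on f U).
  apply: Siii1 SZ' _ _.
  - rewrite Egraph; apply: (DefP_definable (d := d)); apply: DefP_I; last first.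
      by apply: (DefP_mono _ (definable_DefP d DZ')).
    apply: cbox_def => i; rewrite /join; case: (split i) => j; apply: (DefP_definable (d := d)).
    + by apply: (DefP_ext _ (DefP_I (definable_DefP d (definable_inst1 phiB (bbU j))) (definable_DefP d (definable_inst1 phiB (bb0 (lshift m j)))))).
    + by apply: (DefP_ext _ (DefP_I (definable_DefP d (definable_inst1 phiB (bbV j))) (definable_DefP d (definable_inst1 phiB (bb0 (rshift n j)))))).
  - split; first by rewrite Egraph => z [].
    by exists W; split.
have homeo : homeo_on tau f U V.
  split.
  - move=> u Uu; have U0u := UU0 u Uu; split; first by rewrite -gf //; apply: gmap.
    by rewrite hf.
  - move=> u Uu W' PW' W'fu.
    have U0u := UU0 u Uu.
    have W'gu : W' (g u) by rewrite gf.
    have [O [PO Ou HO]] := gcont u U0u W' PW' W'gu.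
    exists O; split => // u' Uu' Ou'; have U0u' := UU0 u' Uu'; rewrite -gf //; exact: HO U0u' Ou'.
  - exists h; split.
    + by move=> v [].
    + by move=> u Uu; rewrite hf //; apply: UU0.
    + by move=> v [V0v Uhv]; rewrite -gf ?hgh //; apply: UU0.
    + move=> v [V0v _] W' PW' W'hv.
      have [O [PO Ov HO]] := hcont v V0v W' PW' W'hv.
      by exists O; split => // v' [V0v' _] Ov'; apply: HO.
have [W'' [PW'' EW'']] := cont_pre gcont (prod_open_cbox tauO2 : prod_open tau C2).
pose WU' := (W'' `&` WU) `&` C1.
have PWU' : prod_open tau WU'.
  by apply: prod_openI => //; [apply: prod_openI | apply: prod_open_cbox].
have EU : U = WU' `&` X.
  apply/seteqP; split => u.
  - move=> [Xu [C1u C2fu]]; have U0u : U0 u by apply: UU0.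
    split => //; split => //; split; last by apply: C1WU.
    by apply/(EW'' u U0u); rewrite gf.
  - move=> [[[W''u WUu] C1u] Xu].
    have U0u : U0 u by rewrite EU0.
    by split => //; split => //; rewrite -gf //; apply/(EW'' u U0u).
have [W3 [PW3 EW3]] := cont_pre hcont PWU'.
exists U, V; split; [|split].
- split; first by move=> u [].
  by exists U; split => //; split; [move=> u [] | exists WU'].
- split; first by move=> v [V0v _]; apply: V0Y.
  exists V; split => //; last by split => //; rewrite hf.
  split; first by move=> v [V0v _]; apply: V0Y.
  exists (W3 `&` WV); split; first by apply: prod_openI.
  apply/seteqP; split => v.
  + move=> [V0v Uhv]; have := V0v; rewrite {1}EV0 => -[WVv Yv]; split => //; split => //.
    by apply/(EW3 v V0v); move: Uhv; rewrite {1}EU => -[].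
  + move=> [[W3v WVv] Yv]; have V0v : V0 v by rewrite EV0.
    split => //; rewrite EU; split; first by apply/(EW3 v V0v).
    by apply: U0X; apply: hmap.
- by split.
Qed.
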